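(* For every $n\ge1$ there is a bijection $\omega$ from the set of Schröder permutations in $\mathcal{S}_n$ to itself such that for all $k\ge3$ and every Schröder permutation $\pi\in\mathcal{S}_n$, $\pi$ avoids $12\cdots k$ if and only if $\omega(\pi)$ avoids $2\,1\,3\,4\cdots k$.
   Context: A permutation avoids $\tau\in\mathcal{S}_k$ if no subsequence of length $k$ is in the same relative order as $\tau$. A Schröder permutation is a permutation avoiding both $1243$ and $2143$. *)

(* Defs.v *)
From mathcomp Require Import all_boot all_fingroup.
Set Implicit Arguments. Unset Strict Implicit. Unset Printing Implicit Defensive.

(* A pattern tau in S_k is a sequence of naturals listing its values, written
   with values 0..k-1 (so "12...k" is iota 0 k, "2134...k" is 1::0::iota 2 (k-2)). *)

Definition contains (n : nat) (pi : {perm 'I_n}) (tau : seq nat) : Prop :=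
  exists idx : seq 'I_n,
    [/\ size idx = size tau,
        sorted ltn (map val idx) &
        forall a b, (a < size tau)%N -> (b < size tau)%N ->
          (nth 0 (map (fun i => val (pi i)) idx) a <
             nth 0 (map (fun i => val (pi i)) idx) b)%N
          = (nth 0 tau a < nth 0 tau b)%N].

Definition avoids (n : nat) (pi : {perm 'I_n}) (tau : seq nat) : Prop :=
  ~ contains pi tau.

Definition pat1243 : seq nat := [:: 0; 1; 3; 2].
Definition pat2143 : seq nat := [:: 1; 0; 3; 2].

Definition schroder (n : nat) (pi : {perm 'I_n}) : Prop :=
  avoids pi pat1243 /\ avoids pi pat2143.

Definition inc_pat (k : nat) : seq nat := iota 0 k.
Definition pat2134 (k : nat) : seq nat := 1 :: 0 :: iota 2 (k - 2).

(* Main.v *)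
Require Import Defs.
From mathcomp Require Import all_boot all_fingroup zify.
From Stdlib Require ClassicalEpsilon.
Set Implicit Arguments. Unset Strict Implicit. Unset Printing Implicit Defensive.

Lemma gtn_trans : transitive gtn.
Proof. move=> y x z /= H1 H2; lia. Qed.

Lemma subseq_cat_split (t A B : seq nat) : subseq t (A ++ B) ->
  exists t1 t2, [/\ t = t1 ++ t2, subseq t1 A & subseq t2 B].
Proof.
case/subseqP=> m Hm ->.
rewrite -(cat_take_drop (size A) m) mask_cat; last first.
  by rewrite size_takel // Hm size_cat leq_addr.
by exists (mask (take (size A) m) A), (mask (drop (size A) m) B); split => //; apply: mask_subseq.
Qed.

Lemma subseq_cons_split (u : nat) t n B : subseq (u :: t) (n :: B) ->
  (u = n /\ subseq t B) \/ subseq (u :: t) B.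
Proof. by rewrite /=; case: eqP => [-> | _]; auto. Qed.

Lemma sorted_pair (s : seq nat) x y : sorted ltn s -> subseq [:: x; y] s -> x < y.
Proof. by move=> Hs Hsub; have := subseq_sorted ltn_trans Hsub Hs => /= /andP[]. Qed.

Lemma sorted_pair_gt (s : seq nat) x y : sorted gtn s -> subseq [:: x; y] s -> y < x.
Proof. by move=> Hs Hsub; have := subseq_sorted gtn_trans Hsub Hs => /= /andP[]. Qed.

Lemma two_in (s : seq nat) x y : x \in s -> y \in s -> x != y ->
  subseq [:: x; y] s \/ subseq [:: y; x] s.
Proof.
elim: s => // c s IH; rewrite !inE => Hx Hy Hxy.
have [Exc|Nxc] := eqVneq x c.
  subst c; left; rewrite /= eqxx sub1seq.
  by move: Hy; rewrite eq_sym (negbTE Hxy).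
have [Eyc|Nyc] := eqVneq y c.
  subst c; right; rewrite /= eqxx sub1seq.
  by move: Hx; rewrite (negbTE Nxc).
move: Hx Hy; rewrite (negbTE Nxc) (negbTE Nyc) /= => Hx Hy.
by case: (IH Hx Hy Hxy) => H; [left|right]; exact: (subseq_trans H (subseq_cons _ _)).
Qed.

Lemma sorted_sub (t s : seq nat) : sorted ltn t -> sorted ltn s -> {subset t <= s} -> subseq t s.
Proof.
elim: s t => [|y s IH] [|x t] //=.
- by move=> _ _ /(_ x); rewrite inE eqxx => /(_ isT).
- move=> Ht Hs Hsub.
  have Hs' : sorted ltn s by case: s Hs {IH Hsub} => //= z s /andP[].
  have Hy : forall z, z \in s -> y < z.
    move=> z Hz; apply: (@sorted_pair (y :: s)) => //; rewrite /= eqxx sub1seq //.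
  have Hx : forall z, z \in t -> x < z.
    move=> z Hz; apply: (@sorted_pair (x :: t)) => //; rewrite /= eqxx sub1seq //.
  have Ht' : sorted ltn t by case: t Ht {Hsub Hx} => //= z t /andP[].
  case: eqP => [Exy|Nxy].
  + subst y; apply: IH => // z Hz.
    have := Hsub z; rewrite !inE Hz orbT => /(_ isT) /orP[/eqP Ez|//].
    by have := Hx z Hz; rewrite Ez ltnn.
  + apply: IH => //.
    move=> z; rewrite inE => /orP[/eqP ->|Hz].
      by have := Hsub x; rewrite !inE eqxx /= => /(_ isT) /orP[/eqP E|]; [case: Nxy|].
    have := Hsub z; rewrite !inE Hz orbT => /(_ isT) /orP[/eqP Ez|//].
    have := Hsub x; rewrite !inE eqxx /= => /(_ isT) /orP[/eqP E|Hxs]; first by case: Nxy.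
    have := Hx z Hz; have := Hy x Hxs; rewrite Ez; lia.
Qed.

Lemma sorted_nth_cmp (t : seq nat) i j : sorted ltn t -> i < size t -> j < size t ->
  (nth 0 t i < nth 0 t j) = (i < j).
Proof.
move=> Ht Hi Hj.
have H := sorted_ltn_nth ltn_trans 0 Ht.
case: (ltngtP i j) => Hij.
- by apply: H.
- have := H j i Hj Hi Hij; lia.
- by subst; rewrite ltnn.
Qed.
Definition Pk (k : nat) (s : seq nat) : Prop :=
  exists t, [/\ subseq t s, size t = k & sorted ltn t].
Definition Qk (k : nat) (s : seq nat) : Prop :=
  exists b a t, [/\ subseq (b :: a :: t) s, a < b, sorted ltn t,
     all (fun x => b < x) t & size t = k - 2].
Definition Sch4 (s : seq nat) : Prop :=
  forall w x y z, subseq [:: w; x; y; z] s -> w < z -> x < z -> z < y -> False.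
Definition Q' (k : nat) (s : seq nat) : Prop :=
  k = 0 \/ (k = 1 /\ s <> [::]) \/ (2 <= k /\ Qk k s).

Lemma Pk_le k j s : Pk k s -> j <= k -> Pk j s.
Proof.
case=> t [Hs Hz Ht] Hj; exists (take j t); split.
- exact: subseq_trans (take_subseq _ _) Hs.
- by rewrite size_takel // Hz.
- exact: (subseq_sorted ltn_trans (take_subseq _ _) Ht).
Qed.

Lemma Qk_le k j s : Qk k s -> 2 <= j -> j <= k -> Qk j s.
Proof.
case=> b [a [t [Hs Hab Ht Hall Hz]]] H2 Hj; exists b, a, (take (j - 2) t); split => //.
- apply: subseq_trans _ Hs; rewrite /= !eqxx; exact: take_subseq.
- exact: (subseq_sorted ltn_trans (take_subseq _ _) Ht).
- by apply/allP => x /mem_take Hx; move/allP: Hall; apply.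
- rewrite size_takel // Hz; lia.
Qed.

Lemma Pk0 s : Pk 0 s.
Proof. by exists [::]; split => //; apply: sub0seq. Qed.

Lemma Pk1 s : s <> [::] -> Pk 1 s.
Proof.
case: s => // x s _; exists [:: x]; split => //.
by rewrite sub1seq inE eqxx.
Qed.

Lemma Pk1_ne s : Pk 1 s -> s <> [::].
Proof. move=> [t [Hs Hz _]] E; subst s; move: Hs; rewrite subseq0 => /eqP Et; by rewrite Et in Hz. Qed.

Lemma Sch4_sub s1 s2 : subseq s1 s2 -> Sch4 s2 -> Sch4 s1.
Proof. move=> H12 H w x y z Hs; apply: H; exact: subseq_trans Hs H12. Qed.

Lemma Pk_sub k s1 s2 : subseq s1 s2 -> Pk k s1 -> Pk k s2.
Proof. move=> H12 [t [Hs Hz Ht]]; exists t; split => //; exact: subseq_trans Hs H12. Qed.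

Lemma Qk_sub k s1 s2 : subseq s1 s2 -> Qk k s1 -> Qk k s2.
Proof. move=> H12 [b [a [t [Hs ? ? ? ?]]]]; exists b, a, t; split => //; exact: subseq_trans Hs H12. Qed.

Lemma dec_noP2 s : sorted gtn s -> ~ Pk 2 s.
Proof.
move=> Hs [t [Hsub Hz Ht]]; case: t Hsub Hz Ht => [|x [|y [|? ?]]] //= Hsub _ Ht.
have := sorted_pair_gt Hs Hsub; move: Ht => /andP[H _]; lia.
Qed.

Lemma inc_noQ2 s : sorted ltn s -> ~ Qk 2 s.
Proof.
move=> Hs [b [a [t [Hsub Hab _ _ _]]]].
have : subseq [:: b; a] s by apply: subseq_trans _ Hsub; rewrite /= !eqxx sub0seq.
move/(sorted_pair Hs); lia.
Qed.

Lemma notdec_P2 s : uniq s -> ~~ sorted gtn s -> Pk 2 s.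
Proof.
elim: s => // x [|y s] IH //= /andP[Hx Hu] Hd.
have [Hyx|Hxy] := ltnP y x.
- move: Hd; rewrite Hyx /= => Hd; apply: (Pk_sub (subseq_cons _ x)); exact: IH.
- exists [:: x; y]; split => //=; last by rewrite andbT ltn_neqAle Hxy andbT;
    apply/eqP => E; move: Hx; rewrite E inE eqxx.
  by rewrite !eqxx sub0seq.
Qed.

Lemma Q2_of s b a : subseq [:: b; a] s -> a < b -> Qk 2 s.
Proof. by move=> H Hab; exists b, a, [::]; split. Qed.

Lemma Sch4_cons_max n t : (forall x, x \in t -> x < n) -> Sch4 t -> Sch4 (n :: t).
Proof.
move=> Hn Ht w x y z /subseq_cons_split [[Ew Hs]|Hs] Hwz Hxz Hzy.
- subst w; have : z \in t by apply: (mem_subseq Hs); rewrite !inE eqxx !orbT.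
  move/Hn; lia.
- exact: Ht Hs Hwz Hxz Hzy.
Qed.

Lemma Pk_cons_max n t k : (forall x, x \in t -> x < n) -> 2 <= k -> Pk k (n :: t) <-> Pk k t.
Proof.
move=> Hn Hk; split; last by apply: Pk_sub; apply: subseq_cons.
case=> t0 [Hs Hz Ht]; case: t0 Hs Hz Ht => [|u [|v r]] Hs Hz Ht; try by subst k.
case/subseq_cons_split: Hs => [[Eu Hs]|Hs].
- subst u; have : v \in t by apply: (mem_subseq Hs); rewrite inE eqxx.
  move/Hn; move: Ht => /= /andP[]; lia.
- by exists [:: u, v & r].
Qed.

Lemma Qk_cons_max n t k : (forall x, x \in t -> x < n) -> 3 <= k -> Qk k (n :: t) <-> Qk k t.
Proof.
move=> Hn Hk; split; last by apply: Qk_sub; apply: subseq_cons.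
case=> b [a [[|c r] [Hs Hab Ht Hall Hz]]]; first by move: Hz => /=; lia.
case/subseq_cons_split: Hs => [[Eb Hs]|Hs].
- subst b; have : c \in t by apply: (mem_subseq Hs); rewrite !inE eqxx orbT.
  move/Hn; move: Hall => /= /andP[]; lia.
- by exists b, a, (c :: r).
Qed.

Lemma Q2_cons_max n t : (forall x, x \in t -> x < n) -> t <> [::] -> Qk 2 (n :: t).
Proof.
case: t => // x t Hn _; apply: (@Q2_of _ n x).
  by rewrite /= !eqxx ?sub0seq.
by apply: Hn; rewrite inE eqxx.
Qed.

Lemma Sch4_inc s : sorted ltn s -> Sch4 s.
Proof.
move=> Hs w x y z Hsub _ _ Hzy.
have : subseq [:: y; z] s by apply: subseq_trans _ Hsub; exact: (suffix_subseq [:: w; x] [:: y; z]).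
move/(sorted_pair Hs); lia.
Qed.
Lemma subseq_map_inv (g : nat -> nat) t s : subseq t (map g s) ->
  exists t0, subseq t0 s /\ t = map g t0.
Proof.
case/subseqP=> m Hm ->; exists (mask m s); split; first exact: mask_subseq.
by rewrite map_mask.
Qed.

Lemma sorted_map_mono (g : nat -> nat) t : {in t &, forall x y, (g x < g y) = (x < y)} ->
  sorted ltn (map g t) = sorted ltn t.
Proof.
case: t => // x r; rewrite /=.
elim: r x => // y r IH x Hg /=.
rewrite Hg ?inE ?eqxx ?orbT // IH // => u v Hu Hv; apply: Hg.
  by rewrite inE Hu orbT.
by rewrite inE Hv orbT.
Qed.

Lemma Pk_map (g : nat -> nat) s k : {in s &, forall x y, (g x < g y) = (x < y)} ->
  Pk k (map g s) <-> Pk k s.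
Proof.
move=> Hg; split.
- case=> t [/subseq_map_inv [t0 [Hs ->]] Hz Ht]; exists t0; split => //.
    by rewrite size_map in Hz.
  rewrite -(sorted_map_mono (g := g)) // => x y Hx Hy; apply: Hg; exact: (mem_subseq Hs).
- case=> t [Hs Hz Ht]; exists (map g t); split.
  + exact: map_subseq.
  + by rewrite size_map.
  + rewrite sorted_map_mono // => x y Hx Hy; apply: Hg; exact: (mem_subseq Hs).
Qed.

Lemma Qk_map (g : nat -> nat) s k : {in s &, forall x y, (g x < g y) = (x < y)} ->
  Qk k (map g s) <-> Qk k s.
Proof.
move=> Hg; split.
- case=> b' [a' [t' [/subseq_map_inv [t0 [Hs Et]] Hab Ht Hall Hz]]].
  case: t0 Hs Et => [|b [|a t]] //= Hs [Eb Ea Et]; subst b' a' t'.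
  have Hin : {subset [:: b, a & t] <= s} by apply: mem_subseq.
  have Hg' : {in b :: a :: t &, forall x y, (g x < g y) = (x < y)}.
    by move=> x y Hx Hy; apply: Hg; apply: Hin.
  exists b, a, t; split => //.
  + by rewrite -Hg' // ?inE ?eqxx ?orbT.
  + rewrite -(sorted_map_mono (g := g)) // => x y Hx Hy; apply: Hg';
      by rewrite !inE ?Hx ?Hy ?orbT.
  + apply/allP => x Hx; have := allP Hall (g x) (map_f g Hx).
    by rewrite Hg' // !inE ?Hx ?eqxx ?orbT.
  + by rewrite size_map in Hz.
- case=> b [a [t [Hs Hab Ht Hall Hz]]].
  have Hin : {subset [:: b, a & t] <= s} by apply: mem_subseq.
  have Hg' : {in b :: a :: t &, forall x y, (g x < g y) = (x < y)}.
    by move=> x y Hx Hy; apply: Hg; apply: Hin.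
  exists (g b), (g a), (map g t); split.
  + by have := map_subseq g Hs.
  + by rewrite Hg' // ?inE ?eqxx ?orbT.
  + rewrite sorted_map_mono // => x y Hx Hy; apply: Hg';
      by rewrite !inE ?Hx ?Hy ?orbT.
  + rewrite all_map; apply/allP => x Hx /=; rewrite Hg' ?inE ?eqxx ?Hx ?orbT //.
    by move/allP: Hall; apply.
  + by rewrite size_map.
Qed.

Lemma Sch4_map (g : nat -> nat) s : {in s &, forall x y, (g x < g y) = (x < y)} ->
  Sch4 s -> Sch4 (map g s).
Proof.
move=> Hg Hs w' x' y' z' /subseq_map_inv [t0 [Hsub Et]].
case: t0 Hsub Et => [|w [|x [|y [|z [|]]]]] //= Hsub [Ew Ex Ey Ez]; subst.
have Hin : {subset [:: w; x; y; z] <= s} by apply: mem_subseq.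
rewrite !Hg ?Hin ?inE ?eqxx ?orbT // => H1 H2 H3.
exact: Hs Hsub H1 H2 H3.
Qed.

Lemma Q'_map (g : nat -> nat) s k : {in s &, forall x y, (g x < g y) = (x < y)} ->
  Q' k (map g s) <-> Q' k s.
Proof.
move=> Hg; rewrite /Q' (Qk_map k Hg).
by case: s {Hg} => [|x s] /=; split; (case=> [->|[[-> H]|H]]; [left|right;left|right;right]).
Qed.
Definition DecH (A B : seq nat) (n a1 : nat) : Prop :=
  [/\ uniq (A ++ n :: B), (forall x, x \in A ++ B -> x < n), a1 \in A
    & (forall x, x \in A -> a1 <= x)].
Definition Struct (A B : seq nat) (a1 : nat) : Prop :=
  forall b a, b \in B -> a \in A -> a != a1 -> b < a.

Lemma sorted_cat_lt (t1 r : seq nat) u x : sorted ltn (t1 ++ u :: r) -> x \in t1 -> x < u.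
Proof.
move=> Hs Hx; apply: (sorted_pair Hs).
have H1 : subseq [:: x] t1 by rewrite sub1seq.
have H2 : subseq [:: u] (u :: r) by rewrite sub1seq mem_head.
exact: (cat_subseq H1 H2).
Qed.

Lemma sorted_cons_lt (t1 r : seq nat) u v : sorted ltn (t1 ++ u :: r) -> v \in r -> u < v.
Proof.
move=> Hs Hv; apply: (sorted_pair Hs).
apply: subseq_trans (suffix_subseq t1 (u :: r)).
by rewrite /= eqxx sub1seq.
Qed.

Lemma sorted_prefix (t1 t2 : seq nat) : sorted ltn (t1 ++ t2) -> sorted ltn t1.
Proof. move=> H; exact: (subseq_sorted ltn_trans (prefix_subseq t1 t2) H). Qed.

Lemma sorted_rcons_max (t : seq nat) n : sorted ltn t -> (forall x, x \in t -> x < n) ->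
  sorted ltn (t ++ [:: n]).
Proof.
rewrite cats1; case: t => //= x t Ht Hn; rewrite rcons_path Ht /=.
by apply: Hn; apply: mem_last.
Qed.


Lemma decH_facts A B n a1 : DecH A B n a1 ->
  [/\ forall x, x \in A -> x < n, forall x, x \in B -> x < n,
      forall x, x \in A -> x \notin B,
      forall x, x \in A ++ n :: B -> x <= n & a1 < n].
Proof.
case=> HU Hn Ha1 Hmin.
have HA : forall x, x \in A -> x < n by move=> x Hx; apply: Hn; rewrite mem_cat Hx.
have HB : forall x, x \in B -> x < n by move=> x Hx; apply: Hn; rewrite mem_cat Hx orbT.
split => //.
- move=> x Hx; move: HU; rewrite cat_uniq => /and3P[_ /hasPn H _].
  apply/negP => HxB; have := H x; rewrite inE HxB orbT => /(_ isT).
  by rewrite Hx.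
- move=> x; rewrite mem_cat inE => /or3P[/HA|/eqP ->|/HB]; lia.
- exact: HA.
Qed.

Lemma sub_a1B (A B : seq nat) (n a1 : nat) : a1 \in A -> subseq (a1 :: B) (A ++ n :: B).
Proof.
case/splitPr => A1 A2; rewrite -catA.
have := @cat_subseq _ [::] (a1 :: B) A1 (a1 :: A2 ++ n :: B); rewrite sub0seq; apply => //.
rewrite /= eqxx.
exact: (subseq_trans (suffix_subseq [:: n] B) (suffix_subseq A2 (n :: B))).
Qed.

Lemma struct_eq A B a1 a b : Struct A B a1 -> a \in A -> b \in B -> a < b -> a = a1.
Proof.
move=> Hst Ha Hb Hab; apply/eqP; apply: contraTT Hab => Hne.
by rewrite -leqNgt ltnW // (Hst b a).
Qed.

Lemma Sch_dec_l A B n a1 : DecH A B n a1 -> Sch4 (A ++ n :: B) ->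
  [/\ Struct A B a1, Sch4 A & Sch4 (a1 :: B)].
Proof.
move=> HD HS; have [HU Hn Ha1 Hmin] := HD.
have [HA HB Hdis Hle Ha1n] := decH_facts HD.
split.
- move=> b a Hb Ha Hne; rewrite ltnNge leq_eqVlt negb_or; apply/andP; split.
    by apply/eqP => E; subst b; move: (Hdis a Ha); rewrite Hb.
  apply/negP => Hab.
  have Ha1a : a1 < a by have := Hmin a Ha; move: Hne; rewrite neq_ltn; case/orP; lia.
  have Hne' : a1 != a by rewrite neq_ltn Ha1a.
  have Hbn := HB b Hb.
  case: (two_in Ha1 Ha Hne') => Hsub.
  + apply: (HS a1 a n b) => //; try lia.
    have := @cat_subseq _ [:: a1; a] [:: n; b] A (n :: B); rewrite Hsub /= eqxx sub1seq Hb.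
    by apply.
  + apply: (HS a a1 n b) => //; try lia.
    have := @cat_subseq _ [:: a; a1] [:: n; b] A (n :: B); rewrite Hsub /= eqxx sub1seq Hb.
    by apply.
- by apply: Sch4_sub HS; apply: prefix_subseq.
- by apply: Sch4_sub HS; apply: sub_a1B.
Qed.
Lemma Sch_dec_r A B n a1 : DecH A B n a1 -> Struct A B a1 -> Sch4 A -> Sch4 (a1 :: B) ->
  Sch4 (A ++ n :: B).
Proof.
move=> HD Hst HSA HSB; have [HU Hn Ha1 Hmin] := HD.
have [HA HB Hdis Hle Ha1n] := decH_facts HD.
move=> w x y z Hs Hwz Hxz Hzy.
have Hu4 : uniq [:: w; x; y; z] := subseq_uniq Hs HU.
have Hin : {subset [:: w; x; y; z] <= A ++ n :: B} := mem_subseq Hs.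
have Hyn : y <= n by apply: Hle; apply: Hin; rewrite !inE eqxx !orbT.
have Hsub1 : forall u, subseq u B -> subseq u (a1 :: B).
  by move=> u Hu; apply: subseq_trans Hu (subseq_cons _ _).
case: (subseq_cat_split Hs) => t1 [t2 [Et H1 H2]].
have HzB : t2 <> [::] -> z \in B.
  move=> Ht2; have : z \in t2.
    move: Et; case/lastP: t2 Ht2 {H2} => // t2' zz _.
    rewrite -cats1 catA => Et; have := congr1 (last 0) Et.
    by rewrite !last_cat /= => ->; rewrite mem_cat mem_head orbT.
  move/(mem_subseq H2); rewrite inE => /orP[/eqP E|//]; lia.
case: t1 Et H1 => [|w1 [|x1 [|y1 [|z1 [|? ?]]]]] /= Et H1.
- subst t2; case/subseq_cons_split: H2 => [[Ew _]|H2]; first lia.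
  exact: HSB w x y z (Hsub1 _ H2) Hwz Hxz Hzy.
- case: Et => Ew Et; subst w1 t2.
  have HzB' : z \in B by apply: HzB.
  case/subseq_cons_split: H2 => [[Ex _]|H2]; first lia.
  have Hw : w \in A by rewrite sub1seq in H1.
  have Ew := struct_eq Hst Hw HzB' Hwz; subst w.
  by apply: (HSB a1 x y z) => //; rewrite /= eqxx.
- case: Et => Ew Ex Et; subst w1 x1 t2.
  have HzB' : z \in B by apply: HzB.
  have Hw : w \in A by apply: (mem_subseq H1); rewrite mem_head.
  have Hx : x \in A by apply: (mem_subseq H1); rewrite !inE eqxx orbT.
  have := struct_eq Hst Hw HzB' Hwz; have := struct_eq Hst Hx HzB' Hxz.
  move=> E1 E2; subst; move: Hu4; rewrite /= !inE eqxx; done.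
- case: Et => Ew Ex Ey Et; subst w1 x1 y1 t2.
  have HzB' : z \in B by apply: HzB.
  have Hw : w \in A by apply: (mem_subseq H1); rewrite mem_head.
  have Hx : x \in A by apply: (mem_subseq H1); rewrite !inE eqxx orbT.
  have := struct_eq Hst Hw HzB' Hwz; have := struct_eq Hst Hx HzB' Hxz.
  move=> E1 E2; subst; move: Hu4; rewrite /= !inE eqxx; done.
- case: Et => Ew Ex Ey Ez Et; subst w1 x1 y1 z1.
  exact: HSA w x y z H1 Hwz Hxz Hzy.
- by case: Et.
Qed.

Lemma P_dec A B n a1 k : DecH A B n a1 -> Struct A B a1 ->
  Pk k.+1 (A ++ n :: B) <-> Pk k A \/ Pk k.+1 (a1 :: B).
Proof.
move=> HD Hst; have [HU Hn Ha1 Hmin] := HD.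
have [HA HB Hdis Hle Ha1n] := decH_facts HD.
split.
- case=> t [Hs Hz Ht].
  case: (subseq_cat_split Hs) => t1 [t2 [Et H1 H2]]; subst t.
  case: t2 H2 Ht Hz {Hs} => [|u r] H2 Ht Hz.
  + left; rewrite cats0 in Ht Hz; apply: (@Pk_le k.+1) => //; by exists t1.
  + case/subseq_cons_split: H2 => [[Eu Hr]|Hr].
    * subst u; case: r Hr Ht Hz => [|v r] Hr Ht Hz.
      -- left; exists t1; split => //; last exact: sorted_prefix Ht.
         by move: Hz; rewrite size_cat /= addn1 => [[]].
      -- have := sorted_cons_lt Ht (mem_head v r).
         have : v \in B by apply: (mem_subseq Hr); rewrite mem_head.
         move/HB; lia.
    * right; exists (t1 ++ u :: r); split => //.
      have HuB : u \in B by apply: (mem_subseq Hr); rewrite mem_head.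
      case: t1 H1 Ht {Hz} => [|x [|y t1]] H1 Ht.
      -- by apply: subseq_trans Hr (subseq_cons _ _).
      -- have Hx : x \in A by rewrite sub1seq in H1.
         have := struct_eq Hst Hx HuB (sorted_cat_lt Ht (mem_head x [::])) => Ex; subst x.
         by rewrite /= eqxx.
      -- have Hx : x \in A by apply: (mem_subseq H1); rewrite mem_head.
         have Hy : y \in A by apply: (mem_subseq H1); rewrite !inE eqxx orbT.
         have Hxu := sorted_cat_lt Ht (mem_head x _).
         have Hyu : y < u by apply: (sorted_cat_lt Ht); rewrite !inE eqxx orbT.
         have := struct_eq Hst Hx HuB Hxu; have := struct_eq Hst Hy HuB Hyu => E1 E2.
         by move: Ht; rewrite E1 E2 /= ltnn.
- case=> [[t [Hs Hz Ht]]|].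
  + exists (t ++ [:: n]); split.
    * by apply: (cat_subseq Hs); rewrite sub1seq mem_head.
    * by rewrite size_cat Hz addn1.
    * by apply: sorted_rcons_max => // x /(mem_subseq Hs); apply: HA.
  + by apply: Pk_sub; apply: sub_a1B.
Qed.
Lemma Q_dec A B n a1 k : DecH A B n a1 -> Struct A B a1 -> 3 <= k ->
  Qk k (A ++ n :: B) <-> Qk k.-1 A \/ Qk k (a1 :: B).
Proof.
move=> HD Hst Hk; have [HU Hn Ha1 Hmin] := HD.
have [HA HB Hdis Hle Ha1n] := decH_facts HD.
split.
- case=> b [a [t [Hs Hab Ht Hall Hz]]].
  have Hin : {subset b :: a :: t <= A ++ n :: B} := mem_subseq Hs.
  case: (subseq_cat_split Hs) => t1 [t2 [Et H1 H2]].
  case: t2 Et H2 => [|u r] Et H2.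
  + left; rewrite cats0 in Et; rewrite -Et in H1.
    apply: (@Qk_le k) => //; [by exists b, a, t | lia | lia].
  + case/subseq_cons_split: H2 => [[Eu Hr]|Hr].
    * subst u; case: t1 Et H1 => [|b1 [|a1' t1]] /= Et H1.
      -- case: Et => Eb _; subst b.
         case: t Hall Hz Hin {Hs Ht} => [|c t] Hall Hz Hin; first by move: Hz => /=; lia.
         move: Hall => /= /andP[Hc _].
         have : c <= n by apply: Hle; apply: Hin; rewrite !inE eqxx !orbT.
         lia.
      -- case: Et => Eb Ea Et; subst b1 a.
         have : b \in A by rewrite sub1seq in H1.
         move/HA; lia.
      -- case: Et => Eb Ea Et; subst b1 a1' t.
         case: r Hr Hall Ht Hz {Hs Hin} => [|c r] Hr Hall Ht Hz.
         ++ left; exists b, a, t1; split => //.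
            ** exact: sorted_prefix Ht.
            ** by move: Hall; rewrite all_cat => /andP[].
            ** by move: Hz; rewrite size_cat /=; lia.
         ++ have := sorted_cons_lt Ht (mem_head c r).
            have : c \in B by apply: (mem_subseq Hr); rewrite mem_head.
            move/HB; lia.
    * right; have HuB : u \in B by apply: (mem_subseq Hr); rewrite mem_head.
      case: t1 Et H1 => [|b1 [|a1' t1]] /= Et H1.
      -- exists b, a, t; split => //.
         by rewrite Et; exact: subseq_trans Hr (subseq_cons _ _).
      -- case: Et => Eb Et; subst b1.
         have HbA : b \in A by rewrite sub1seq in H1.
         case: t Et Ht Hall Hz {Hs Hin} => [|c t] Et Ht Hall Hz; first by move: Hz => /=; lia.
         case: Et => Ea Ec; subst u r.
         have HcB : c \in B by apply: (mem_subseq Hr); rewrite !inE eqxx orbT.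
         move: (Hall) => /= /andP[Hbc _].
         have Eb := struct_eq Hst HbA HcB Hbc; subst b.
         by exists a1, a, (c :: t); split => //; rewrite /= eqxx.
      -- case: Et => Eb Ea Et; subst b1 a1' t.
         have HbA : b \in A by apply: (mem_subseq H1); rewrite mem_head.
         have HaA : a \in A by apply: (mem_subseq H1); rewrite !inE eqxx orbT.
         have Hbu : b < u by move/allP: Hall; apply; rewrite mem_cat mem_head orbT.
         have Eb := struct_eq Hst HbA HuB Hbu; subst b.
         by have := Hmin a HaA; rewrite leqNgt Hab.
- case=> [[b [a [t [Hs Hab Ht Hall Hz]]]]|].
  + exists b, a, (t ++ [:: n]); split => //.
    * by apply: (cat_subseq Hs); rewrite sub1seq mem_head.
    * apply: sorted_rcons_max => // x Hx; apply: HA; apply: (mem_subseq Hs).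
      by rewrite !inE Hx !orbT.
    * rewrite all_cat Hall /= andbT; apply: HA; apply: (mem_subseq Hs).
      by rewrite mem_head.
    * rewrite size_cat Hz /=; lia.
  + by apply: Qk_sub; apply: sub_a1B.
Qed.

Lemma Q2_dec A B n a1 : DecH A B n a1 -> Qk 2 A \/ B <> [::] -> Qk 2 (A ++ n :: B).
Proof.
move=> HD; have [HA HB Hdis Hle Ha1n] := decH_facts HD.
case=> [H|].
- by apply: Qk_sub H; apply: prefix_subseq.
- case: B HD HB {Hdis Hle} => // c B HD HB _.
  apply: (@Q2_of _ n c); last by apply: HB; rewrite mem_head.
  apply: subseq_trans (suffix_subseq A _).
  by rewrite /= !eqxx ?sub0seq.
Qed.
Definition maxl (s : seq nat) := foldr maxn 0 s.
Definition minl (s : seq nat) := foldr minn (head 0 s) s.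

Lemma maxl_ge x s : x \in s -> x <= maxl s.
Proof.
elim: s => // y s IH; rewrite inE /= => /orP[/eqP ->|/IH H]; first exact: leq_maxl.
exact: leq_trans H (leq_maxr _ _).
Qed.

Lemma maxl_mem s : s != [::] -> maxl s \in s.
Proof.
elim: s => // y s IH _; change (maxn y (maxl s) \in y :: s).
case: s IH => [|z s] IH; first by rewrite /= maxn0 mem_head.
have Hm := IH isT.
rewrite /maxn; case: ifP => _; last by rewrite mem_head.
by rewrite inE Hm orbT.
Qed.

Lemma foldr_minn_le d s x : x \in s -> foldr minn d s <= x.
Proof.
elim: s => // y s IH; rewrite inE /= => /orP[/eqP ->|/IH H]; first exact: geq_minl.
exact: leq_trans (geq_minr _ _) H.
Qed.

Lemma foldr_minn_mem d s : foldr minn d s \in d :: s.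
Proof.
elim: s => [|y s IH] /=; first by rewrite mem_head.
rewrite /minn; case: ifP => _; first by rewrite !inE eqxx orbT.
move: IH; rewrite !inE => /orP[->|->]; by rewrite ?orbT.
Qed.

Lemma minl_le x s : x \in s -> minl s <= x.
Proof. exact: foldr_minn_le. Qed.

Lemma minl_mem s : s != [::] -> minl s \in s.
Proof.
case: s => // y s _; have := foldr_minn_mem y (y :: s).
by rewrite /minl /= inE => /orP[/eqP ->|]; rewrite ?mem_head.
Qed.

Definition relab (a h : nat) (x : nat) : nat := if x == a then h else x.

Definition om_step (rec : seq nat -> seq nat) (s : seq nat) : seq nat :=
  if size s <= 1 then s else
  if sorted gtn s then rev s else
  let n := maxl s in let i := index n s in
  let A := take i s in let B := drop i.+1 s in
  if (B == [::]) && sorted gtn A then n :: rev A else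
  if i == 0 then n :: rec B else
  let a1 := minl A in let t' := rec (a1 :: B) in
  map (relab a1 (head 0 t')) (rec A) ++ n :: behead t'.

Fixpoint om (f : nat) (s : seq nat) : seq nat :=
  match f with 0 => s | f'.+1 => om_step (om f') s end.

Lemma split_max s : uniq s -> 0 < size s ->
  [/\ s = take (index (maxl s) s) s ++ maxl s :: drop (index (maxl s) s).+1 s,
      index (maxl s) s < size s &
      forall x, x \in take (index (maxl s) s) s ++ drop (index (maxl s) s).+1 s -> x < maxl s].
Proof.
move=> Hu Hs.
have Hm : maxl s \in s by apply: maxl_mem; case: s Hs Hu.
have Hi : index (maxl s) s < size s by rewrite index_mem.
have Es : s = take (index (maxl s) s) s ++ maxl s :: drop (index (maxl s) s).+1 s.
  by rewrite -{1}(cat_take_drop (index (maxl s) s) s) (drop_nth 0 Hi) nth_index.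
split => // x Hx.
have Hxs : x \in s by rewrite Es mem_cat inE; move: Hx; rewrite mem_cat => /orP[]->; rewrite ?orbT.
rewrite ltn_neqAle maxl_ge // andbT.
apply/eqP => E; subst x.
move: Hu; rewrite {1}Es cat_uniq => /and3P[_ H1 /= /andP[H2 _]].
move: Hx; rewrite mem_cat => /orP[H|H].
- by move: H1 => /hasPn /(_ (maxl s) (mem_head _ _)); rewrite H.
- by move: H2; rewrite H.
Qed.

Lemma base_stats s k : size s <= 1 -> Pk k s <-> Q' k s.
Proof.
move=> Hs; split.
- case: k => [|[|k]] H.
  + by left.
  + by right; left; split => //; apply: Pk1_ne.
  + exfalso; case: H => t [Hsub Hz _].
    by have := leq_trans (size_subseq Hsub) Hs; rewrite Hz.
- case=> [->|[[-> H]|[Hk [b [a [t [Hsub _ _ _ _]]]]]]].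
  + exact: Pk0.
  + exact: Pk1.
  + exfalso; by have := leq_trans (size_subseq Hsub) Hs.
Qed.

Lemma gen_facts A B n a1 oA t' : DecH A B n a1 -> Struct A B a1 ->
  perm_eq oA A -> perm_eq t' (a1 :: B) ->
  [/\ t' = head 0 t' :: behead t',
      DecH (map (relab a1 (head 0 t')) oA) (behead t') n (head 0 t'),
      Struct (map (relab a1 (head 0 t')) oA) (behead t') (head 0 t'),
      perm_eq (map (relab a1 (head 0 t')) oA ++ n :: behead t') (A ++ n :: B)
    & ({in oA &, forall x y, (relab a1 (head 0 t') x < relab a1 (head 0 t') y) = (x < y)}
    /\ oA = map (relab (head 0 t') a1) (map (relab a1 (head 0 t')) oA))].
Proof.
move=> HD Hst HoA Ht'.
have [HU Hn Ha1 Hmin] := HD.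
have [HA HB Hdis Hle Ha1n] := decH_facts HD.
have Et : t' = head 0 t' :: behead t' by case: (t') Ht' => [/perm_size //|].
set h := head 0 t'; set B'' := behead t'; set A'' := map (relab a1 h) oA.
have HuA : uniq A by move: HU; rewrite cat_uniq => /andP[].
have HuB : uniq B by move: HU; rewrite cat_uniq => /and3P[_ _ /= /andP[]].
have Hua1B : uniq (a1 :: B) by rewrite /= HuB andbT; apply: Hdis.
have Hut : uniq t' by rewrite (perm_uniq Ht').
have HuoA : uniq oA by rewrite (perm_uniq HoA).
have HmemoA : forall x, x \in oA -> x \in A by move=> x; rewrite (perm_mem HoA).
have Hmemt : forall x, x \in t' -> x \in a1 :: B by move=> x; rewrite (perm_mem Ht').
have Hh : h \in a1 :: B by apply: Hmemt; rewrite Et mem_head.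
have Hhlt : forall y, y \in A -> y != a1 -> h < y.
  move=> y Hy Hne; move: Hh; rewrite inE => /orP[/eqP ->|HhB].
  + by rewrite ltn_neqAle eq_sym Hne Hmin.
  + exact: Hst.
have HhA : forall y, y \in A -> y != a1 -> y != h.
  by move=> y Hy Hne; have := Hhlt y Hy Hne; rewrite neq_ltn => ->; rewrite orbT.
have Hg : {in oA &, forall x y, (relab a1 h x < relab a1 h y) = (x < y)}.
  move=> x y /HmemoA Hx /HmemoA Hy; rewrite /relab.
  case: (eqVneq x a1) => [->|Hxa]; case: (eqVneq y a1) => [->|Hya].
  + by rewrite !ltnn.
  + by rewrite Hhlt // ltn_neqAle eq_sym Hya Hmin.
  + by rewrite ltnNge (ltnW (Hhlt x Hx Hxa)) ltnNge Hmin.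
  + by [].
have Ha1oA : a1 \in oA by rewrite (perm_mem HoA).
have HmemA'' : forall x, x \in A'' -> x = h \/ (x \in A /\ x != a1).
  move=> x /mapP [y Hy Ex]; rewrite Ex /relab; case: (eqVneq y a1) => [_|Hya]; first by left.
  right; split; [exact: HmemoA | exact: Hya].
have HhA'' : h \in A''.
  apply/mapP; exists a1; first exact: Ha1oA.
  by rewrite /relab eqxx.
have HuB'' : uniq (h :: B'') by rewrite -Et.
have HmemB'' : forall x, x \in B'' -> x \in a1 :: B /\ x != h.
  move=> x Hx; split; first by apply: Hmemt; rewrite Et inE Hx orbT.
  by apply/eqP => E; subst x; move: HuB'' => /= /andP[]; rewrite Hx.
have HszB : size B'' = size B.
  by have := perm_size Ht'; rewrite Et /= => [[]].
have Hsub : {subset A ++ n :: B <= A'' ++ n :: B''}.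
  move=> x; rewrite !mem_cat !inE => /or3P[HxA|/eqP ->|HxB]; last 2 first.
  - by rewrite eqxx orbT.
  - have : x \in t' by rewrite (perm_mem Ht') inE HxB orbT.
    rewrite Et inE => /orP[/eqP ->|->]; by rewrite ?HhA'' ?orbT.
  - case: (eqVneq x a1) => [->|Hxa].
    + have : a1 \in t' by rewrite (perm_mem Ht') mem_head.
      rewrite Et inE => /orP[/eqP Eh|->]; by rewrite ?Eh ?HhA'' ?orbT.
    + apply/orP; left; apply/mapP; exists x; first by rewrite (perm_mem HoA).
      by rewrite /relab (negbTE Hxa).
have Hsize : size (A'' ++ n :: B'') <= size (A ++ n :: B).
  by rewrite !size_cat /= size_map HszB (perm_size HoA).
have Huout : uniq (A'' ++ n :: B'') := leq_size_uniq HU Hsub Hsize.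
have Hperm : perm_eq (A'' ++ n :: B'') (A ++ n :: B).
  rewrite perm_sym; apply: uniq_perm => //.
  exact: (uniq_min_size HU Hsub Hsize).2.
split => //; last split => //.
- split => //.
  + move=> x; rewrite mem_cat => /orP[/HmemA''[->|[Hx _]]|/HmemB''[Hx _]].
    * by move: Hh; rewrite inE => /orP[/eqP ->//|/HB].
    * exact: HA.
    * by move: Hx; rewrite inE => /orP[/eqP ->//|/HB].
  + move=> x /HmemA'' [->//|[Hx Hxa]]; exact: ltnW (Hhlt x Hx Hxa).
- move=> b a Hb Ha Hah.
  have [Ea|[HaA Haa1]] := HmemA'' a Ha; first by move: Hah; rewrite Ea eqxx.
  have [Hb' _] := HmemB'' b Hb.
  move: Hb'; rewrite inE => /orP[/eqP ->|HbB]; last exact: Hst.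
  by rewrite ltn_neqAle eq_sym Haa1 Hmin.
- rewrite -map_comp -{1}(map_id oA); apply/eq_in_map => x Hx /=.
  rewrite /relab; case: (eqVneq x a1) => [->|Hxa]; first by rewrite eqxx.
  by rewrite (negbTE (HhA x (HmemoA x Hx) Hxa)).
Qed.
Lemma Q'_ge2 k s : 2 <= k -> Q' k s <-> Qk k s.
Proof.
move=> Hk; split; last by move=> H; right; right.
by case=> [E|[[E _]|[_ H]]] //; subst k.
Qed.

Lemma Q'_1 s : s <> [::] -> Q' 1 s.
Proof. by move=> H; right; left. Qed.

Lemma nil_of_size (s : seq nat) : 1 < size s -> s <> [::].
Proof. by case: s. Qed.

Lemma om_main f : forall s, size s <= f -> uniq s -> Sch4 s ->
  [/\ perm_eq (om f s) s, Sch4 (om f s) & forall k, Pk k s <-> Q' k (om f s)].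
Proof.
elim: f => [|f IH] s Hsz Hu HS.
  split => // k; apply: base_stats; exact: leq_trans Hsz _.
rewrite [om _ _]/= /om_step.
case: (leqP (size s) 1) => Hs1.
  by split => // k; apply: base_stats.
have Hsne := nil_of_size Hs1.
have [Es Hi Hlt] := split_max Hu (ltnW Hs1).
move: Es Hi Hlt.
move Ei: (index (maxl s) s) => i; move En: (maxl s) => n.
move EA: (take i s) => A; move EB: (drop i.+1 s) => B => Es Hi Hlt.
cbv zeta.
have HU : uniq (A ++ n :: B) by rewrite -Es.
have HszA : size A = i by rewrite -EA size_takel // ltnW.
have Hsize : size s = size A + (size B).+1 by rewrite {1}Es size_cat.
case: ifP => Hdec.
  have Hinc : sorted ltn (rev s) by rewrite rev_sorted.
  have Hrne : rev s <> [::] by move=> E; move: Hs1; rewrite -size_rev E.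
  split; first by rewrite perm_rev perm_refl.
    exact: Sch4_inc.
  case=> [|[|k]].
  - by split => _; [left | exact: Pk0].
  - by split => _; [exact: Q'_1 | exact: Pk1].
  - split => H; exfalso.
    + by apply: (dec_noP2 Hdec); apply: Pk_le H _.
    + move/Q'_ge2: H => /(_ isT) H.
      by apply: (inc_noQ2 Hinc); apply: Qk_le H _ _.
case: ifP => HexA.
  move/andP: HexA => [/eqP EB0 HdecA]; clear EB; subst B.
  have HAne : A <> [::] by move=> E; move: Hs1; rewrite Es E.
  have HD : DecH A [::] n (minl A).
    split => //; [by apply: minl_mem; case: (A) HAne | move=> x; exact: minl_le].
  have Hst : Struct A [::] (minl A) by [].
  have Hlt' : forall x, x \in rev A -> x < n.
    by move=> x; rewrite mem_rev => Hx; apply: Hlt; rewrite cats0.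
  have Hinc : sorted ltn (rev A) by rewrite rev_sorted.
  have HrAne : rev A <> [::] by move=> E; apply: HAne; rewrite -(revK A) E.
  split.
  - by rewrite Es perm_sym perm_catC /= perm_cons perm_sym perm_rev perm_refl.
  - by apply: Sch4_cons_max => //; apply: Sch4_inc.
  - case=> [|[|[|k]]].
    + by split => _; [left | exact: Pk0].
    + by split => _; [exact: Q'_1 | exact: Pk1].
    + split => _; last by rewrite Es; apply/(P_dec 1 HD Hst); left; exact: Pk1.
      by apply/Q'_ge2 => //; apply: Q2_cons_max.
    + rewrite Es (P_dec _ HD Hst) (Q'_ge2 _ (isT : 2 <= k.+3)) (Qk_cons_max Hlt') //.
      split => [[H|H]|H]; exfalso.
      * by apply: (dec_noP2 HdecA); apply: Pk_le H _.
      * by case: H => t [Hsub Hz _]; have := size_subseq Hsub; rewrite Hz.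
      * by apply: (inc_noQ2 Hinc); apply: Qk_le H _ _.
case: ifP => Hi0.
  have EA0 : A = [::] by rewrite -EA (eqP Hi0) take0.
  clear EA; subst A; rewrite /= in Es Hsize HU Hlt.
  have HuB : uniq B by move: HU => /andP[].
  have HSB : Sch4 B by apply: Sch4_sub HS; rewrite Es; apply: subseq_cons.
  have HszB : size B <= f by move: Hsz; rewrite Hsize.
  have [HpB HSoB HstB] := IH B HszB HuB HSB.
  have HBne : B <> [::] by move=> E; move: Hs1; rewrite Hsize E.
  have HBnd : ~~ sorted gtn B.
    apply: contraFN Hdec => H; rewrite Es; case: (B) H Hlt {HpB HstB HBne HSB HuB HszB HU Es Hsize} => [//|b B'] /= -> Hlt.
    by rewrite andbT; apply: Hlt; rewrite mem_head.
  have HPB := notdec_P2 HuB HBnd.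
  have HQB : Qk 2 (om f B) by apply/(Q'_ge2 _ (isT : 2 <= 2)); apply/HstB.
  have Hlt' : forall x, x \in om f B -> x < n by move=> x; rewrite (perm_mem HpB); apply: Hlt.
  split.
  - by rewrite Es perm_cons.
  - exact: Sch4_cons_max.
  - case=> [|[|[|k]]].
    + by split => _; [left | exact: Pk0].
    + by split => _; [exact: Q'_1 | exact: Pk1].
    + split => _; last by apply: Pk_sub HPB; rewrite Es; apply: subseq_cons.
      by apply/Q'_ge2 => //; apply: Qk_sub HQB; apply: subseq_cons.
    + rewrite Es (Pk_cons_max Hlt) // HstB !(Q'_ge2 _ (isT : 2 <= k.+3)).
      by rewrite (Qk_cons_max Hlt').
have Hi1 : 0 < i by rewrite lt0n Hi0.
have HAne : A <> [::] by move=> E; move: HszA; rewrite E => Ei0; move: Hi1; rewrite -Ei0.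
have HD : DecH A B n (minl A).
  split => //; [by apply: minl_mem; case: (A) HAne | move=> x; exact: minl_le].
have HS' : Sch4 (A ++ n :: B) by rewrite -Es.
have [Hst HSA HSa1B] := Sch_dec_l HD HS'.
have [HA HB Hdis Hle Ha1n] := decH_facts HD.
have HuA : uniq A by move: HU; rewrite cat_uniq => /andP[].
have HuB : uniq B by move: HU; rewrite cat_uniq => /and3P[_ _ /= /andP[]].
have Hua1B : uniq (minl A :: B).
  by rewrite /= HuB andbT; apply: Hdis; apply: minl_mem; case: (A) HAne.
have HszA' : size A <= f by move: Hsz; rewrite Hsize; lia.
have Hsza1B : size (minl A :: B) <= f by move: Hsz; rewrite Hsize /= HszA; lia.
have [HpA HSoA HstA] := IH A HszA' HuA HSA.
have [Hpt HSt Hstt] := IH (minl A :: B) Hsza1B Hua1B HSa1B.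
have [Et HD'' Hst'' Hperm [Hg Hinv]] := gen_facts HD Hst HpA Hpt.
set h := head 0 (om f (minl A :: B)) in Et HD'' Hst'' Hperm Hg Hinv *.
set B'' := behead (om f (minl A :: B)) in Et HD'' Hst'' Hperm Hg Hinv *.
set A'' := map (relab (minl A) h) (om f A) in HD'' Hst'' Hperm Hinv *.
have Hout_ne : A'' ++ n :: B'' <> [::] by case: (A'').
split.
- by rewrite Es.
- apply: Sch_dec_r HD'' Hst'' _ _; first exact: Sch4_map.
  by rewrite -Et.
- case=> [|[|k]].
  + by split => _; [left | exact: Pk0].
  + by split => _; [exact: Q'_1 | exact: Pk1].
  + rewrite Es (P_dec _ HD Hst); case: k => [|k].
    * split => _; last by left; exact: Pk1.
      apply/Q'_ge2 => //; apply: Q2_dec HD'' _.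
      move/negbT: HexA; rewrite negb_and => /orP[HBne|HAnd].
      -- right => E; move/eqP: HBne; apply.
         have := perm_size Hpt; rewrite Et /= -/B'' E /=; by case: (B).
      -- left; rewrite /A'' (Qk_map 2 Hg); apply/(Q'_ge2 _ (isT : 2 <= 2)).
         by apply/HstA; apply: notdec_P2.
    * rewrite HstA Hstt !(Q'_ge2 _ (isT : 2 <= k.+3)) (Q'_ge2 _ (isT : 2 <= k.+2)).
      rewrite -(Qk_map _ Hg) -/A'' Et (Q_dec HD'' Hst'') //.
Qed.
Lemma om_cases f s : uniq s -> 1 < size s ->
  (sorted gtn s /\ om f.+1 s = rev s) \/
  (~~ sorted gtn s /\ exists A, [/\ s = A ++ [:: maxl s], A <> [::], sorted gtn A
       & om f.+1 s = maxl s :: rev A]) \/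
  (~~ sorted gtn s /\ exists B, [/\ s = maxl s :: B, ~~ sorted gtn B
       & om f.+1 s = maxl s :: om f B]) \/
  (~~ sorted gtn s /\ exists A B, [/\ s = A ++ maxl s :: B, A <> [::], DecH A B (maxl s) (minl A)
       & om f.+1 s = map (relab (minl A) (head 0 (om f (minl A :: B)))) (om f A)
                     ++ maxl s :: behead (om f (minl A :: B))]).
Proof.
move=> Hu Hs1.
rewrite [om _ _]/= /om_step leqNgt Hs1 /=.
have [Es Hi Hlt] := split_max Hu (ltnW Hs1).
move: Es Hi Hlt.
move Ei: (index (maxl s) s) => i; move En: (maxl s) => n.
move EA: (take i s) => A; move EB: (drop i.+1 s) => B => Es Hi Hlt.
cbv zeta.
have HU : uniq (A ++ n :: B) by rewrite -Es.
have HszA : size A = i by rewrite -EA size_takel // ltnW.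
case: ifP => Hdec; first by left.
right; case: ifP => HexA.
  move/andP: HexA => [/eqP EB0 HdecA]; clear EB; subst B.
  left; split => //; exists A; split => //.
  by move=> E; move: Hs1; rewrite Es E.
right; case: ifP => Hi0.
  have EA0 : A = [::] by rewrite -EA (eqP Hi0) take0.
  clear EA; subst A; left; split => //; exists B; split => //.
  apply: contraFN Hdec => H; rewrite Es; case: (B) H Hlt {Es HU EB} => [//|b B'] /= -> Hlt.
  by rewrite andbT; apply: Hlt; rewrite mem_head.
right; split => //; exists A, B.
have Hi1 : 0 < i by rewrite lt0n Hi0.
have HAne : A <> [::] by move=> E; move: HszA; rewrite E => Ei0; move: Hi1; rewrite -Ei0.
split => //.
split => //; [by apply: minl_mem; case: (A) HAne | move=> x; exact: minl_le].
Qed.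

Lemma gen_pack f A B n : DecH A B n (minl A) -> Sch4 (A ++ n :: B) ->
  size (A ++ n :: B) <= f.+1 -> A <> [::] ->
  [/\ [/\ size A <= f, size (minl A :: B) <= f, uniq A, uniq (minl A :: B)
        & Sch4 A /\ Sch4 (minl A :: B)],
      om f (minl A :: B) = head 0 (om f (minl A :: B)) :: behead (om f (minl A :: B)),
      DecH (map (relab (minl A) (head 0 (om f (minl A :: B)))) (om f A))
           (behead (om f (minl A :: B))) n (head 0 (om f (minl A :: B))),
      size (om f A) = size A
    & om f A = map (relab (head 0 (om f (minl A :: B))) (minl A))
        (map (relab (minl A) (head 0 (om f (minl A :: B)))) (om f A))].
Proof.
move=> HD HS Hsz HAne.
have [HU _ Ha1 _] := HD.
have [Hst HSA HSa1B] := Sch_dec_l HD HS.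
have [HA HB Hdis Hle Ha1n] := decH_facts HD.
have HuA : uniq A by move: HU; rewrite cat_uniq => /andP[].
have HuB : uniq B by move: HU; rewrite cat_uniq => /and3P[_ _ /= /andP[]].
have Hua1B : uniq (minl A :: B) by rewrite /= HuB andbT; apply: Hdis.
have HAsz : 0 < size A by case: (A) HAne.
have HszA' : size A <= f by move: Hsz; rewrite size_cat /=; lia.
have Hsza1B : size (minl A :: B) <= f by move: Hsz; rewrite size_cat /=; lia.
have [HpA _ _] := om_main HszA' HuA HSA.
have [Hpt _ _] := om_main Hsza1B Hua1B HSa1B.
have [Et HD'' _ _ [_ Hinv]] := gen_facts HD Hst HpA Hpt.
by split => //; apply: perm_size.
Qed.

Lemma cat_sep (x : nat) p1 p2 q1 q2 : x \notin p1 -> x \notin p2 ->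
  p1 ++ x :: q1 = p2 ++ x :: q2 -> p1 = p2 /\ q1 = q2.
Proof.
elim: p1 p2 => [|y p1 IH] [|z p2] /=.
- by move=> _ _ [].
- by move=> _; rewrite inE negb_or => /andP[/negP Hxz _] [E]; case: Hxz; rewrite E.
- by rewrite inE negb_or => /andP[/negP Hxy _] _ [E]; case: Hxy; rewrite E.
- rewrite !inE !negb_or => /andP[_ H1] /andP[_ H2] [-> E].
  by have [-> ->] := IH p2 H1 H2 E.
Qed.

Lemma maxl_perm s1 s2 : perm_eq s1 s2 -> s1 != [::] -> maxl s1 = maxl s2.
Proof.
move=> Hp Hne.
have Hne2 : s2 != [::] by move: Hne; rewrite -!size_eq0 (perm_size Hp).
apply/eqP; rewrite eqn_leq; apply/andP; split; apply: maxl_ge.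
- by rewrite -(perm_mem Hp); apply: maxl_mem.
- by rewrite (perm_mem Hp); apply: maxl_mem.
Qed.

Lemma dec_P2 s : uniq s -> sorted gtn s <-> ~ Pk 2 s.
Proof.
move=> Hu; split; first exact: dec_noP2.
by move=> H; apply/negPn/negP => /(notdec_P2 Hu).
Qed.

Lemma nonemptyQ2 f B : size B <= f -> uniq B -> Sch4 B -> ~~ sorted gtn B -> Qk 2 (om f B).
Proof.
move=> Hsz Hu HS Hnd; have [_ _ Hst] := om_main Hsz Hu HS.
by apply/(Q'_ge2 _ (isT : 2 <= 2)); apply/Hst; apply: notdec_P2.
Qed.
Lemma DecH_notin A B n a : DecH A B n a -> n \notin A.
Proof.
case=> HU _ _ _; move: HU; rewrite cat_uniq => /and3P[_ /hasPn H _].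
by apply/negP => Hn; have := H n (mem_head _ _); rewrite Hn.
Qed.

Lemma head_not_n A B n h X : DecH A B n h -> A ++ n :: B = n :: X -> False.
Proof.
move=> HD; have Hn := DecH_notin HD; have [_ _ Hh _] := HD.
case: A Hn Hh {HD} => // y A Hn _ [Ey _]; subst y.
by move: Hn; rewrite mem_head.
Qed.

Lemma om_inj f : forall s1 s2, size s1 <= f -> size s2 <= f -> uniq s1 -> uniq s2 ->
  Sch4 s1 -> Sch4 s2 -> om f s1 = om f s2 -> s1 = s2.
Proof.
elim: f => [|f IH] s1 s2 Hsz1 Hsz2 Hu1 Hu2 HS1 HS2 Heq.
  by move: Hsz1 Hsz2; rewrite !leqn0 !size_eq0 => /eqP -> /eqP ->.
have [Hp1 _ Hst1] := om_main Hsz1 Hu1 HS1.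
have [Hp2 _ Hst2] := om_main Hsz2 Hu2 HS2.
have Hp : perm_eq s1 s2.
  rewrite perm_sym in Hp1; apply: perm_trans Hp1 _; by rewrite Heq.
have Hsz := perm_size Hp.
case: (leqP (size s1) 1) => Hs1.
  have Hs2 : size s2 <= 1 by rewrite -Hsz.
  by move: Heq; rewrite /= /om_step Hs1 Hs2.
have Hs2 : 1 < size s2 by rewrite -Hsz.
have Hn : maxl s2 = maxl s1.
  by symmetry; apply: maxl_perm Hp _; case: (s1) Hs1.
have Hdeq : sorted gtn s1 <-> sorted gtn s2.
  by rewrite !dec_P2 // Hst1 Hst2 Heq.
move: (om_cases f Hu2 Hs2); rewrite Hn => C2.
have C1 := om_cases f Hu1 Hs1.
move: Heq Hdeq Hsz1 Hsz2 HS1 HS2 Hu1 Hu2 C1 C2.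
move: (maxl s1) => n Heq Hdeq Hsz1 Hsz2 HS1 HS2 Hu1 Hu2.
case=> [[D1 E1]|[[D1 [A1 [Es1 HA1 HdA1 E1]]]|[[D1 [B1 [Es1 HdB1 E1]]]|[D1 [A1 [B1 [Es1 HA1 HD1 E1]]]]]]];
case=> [[D2 E2]|[[D2 [A2 [Es2 HA2 HdA2 E2]]]|[[D2 [B2 [Es2 HdB2 E2]]]|[D2 [A2 [B2 [Es2 HA2 HD2 E2]]]]]]];
  try (by exfalso; move/Hdeq: D1; rewrite (negbTE D2));
  try (by exfalso; move/Hdeq: D2; rewrite (negbTE D1));
  rewrite E1 E2 in Heq.
- by rewrite -(revK s1) Heq revK.
- case: Heq => /(congr1 rev); rewrite !revK => EA; by rewrite Es1 Es2 EA.
- case: Heq => Heq; exfalso.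
  have HuB2 : uniq B2 by move: Hu2; rewrite Es2 => /andP[].
  have HSB2 : Sch4 B2 by apply: Sch4_sub HS2; rewrite Es2; apply: subseq_cons.
  have HszB2 : size B2 <= f by move: Hsz2; rewrite Es2.
  have := nonemptyQ2 HszB2 HuB2 HSB2 HdB2; rewrite -Heq.
  by apply: inc_noQ2; rewrite rev_sorted.
- exfalso; have HD2' : Sch4 (A2 ++ n :: B2) by rewrite -Es2.
  have Hsz2' : size (A2 ++ n :: B2) <= f.+1 by rewrite -Es2.
  have [_ _ HD'' _ _] := gen_pack HD2 HD2' Hsz2' HA2.
  exact: head_not_n HD'' (esym Heq).
- case: Heq => Heq; exfalso.
  have HuB1 : uniq B1 by move: Hu1; rewrite Es1 => /andP[].
  have HSB1 : Sch4 B1 by apply: Sch4_sub HS1; rewrite Es1; apply: subseq_cons.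
  have HszB1 : size B1 <= f by move: Hsz1; rewrite Es1.
  have := nonemptyQ2 HszB1 HuB1 HSB1 HdB1; rewrite Heq.
  by apply: inc_noQ2; rewrite rev_sorted.
- case: Heq => Heq.
  have HuB1 : uniq B1 by move: Hu1; rewrite Es1 => /andP[].
  have HSB1 : Sch4 B1 by apply: Sch4_sub HS1; rewrite Es1; apply: subseq_cons.
  have HszB1 : size B1 <= f by move: Hsz1; rewrite Es1.
  have HuB2 : uniq B2 by move: Hu2; rewrite Es2 => /andP[].
  have HSB2 : Sch4 B2 by apply: Sch4_sub HS2; rewrite Es2; apply: subseq_cons.
  have HszB2 : size B2 <= f by move: Hsz2; rewrite Es2.
  by rewrite Es1 Es2 (IH _ _ HszB1 HszB2 HuB1 HuB2 HSB1 HSB2 Heq).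
- exfalso; have HD2' : Sch4 (A2 ++ n :: B2) by rewrite -Es2.
  have Hsz2' : size (A2 ++ n :: B2) <= f.+1 by rewrite -Es2.
  have [_ _ HD'' _ _] := gen_pack HD2 HD2' Hsz2' HA2.
  exact: head_not_n HD'' (esym Heq).
- exfalso; have HD1' : Sch4 (A1 ++ n :: B1) by rewrite -Es1.
  have Hsz1' : size (A1 ++ n :: B1) <= f.+1 by rewrite -Es1.
  have [_ _ HD'' _ _] := gen_pack HD1 HD1' Hsz1' HA1.
  exact: head_not_n HD'' Heq.
- exfalso; have HD1' : Sch4 (A1 ++ n :: B1) by rewrite -Es1.
  have Hsz1' : size (A1 ++ n :: B1) <= f.+1 by rewrite -Es1.
  have [_ _ HD'' _ _] := gen_pack HD1 HD1' Hsz1' HA1.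
  exact: head_not_n HD'' Heq.
- have HS1' : Sch4 (A1 ++ n :: B1) by rewrite -Es1.
  have Hsz1' : size (A1 ++ n :: B1) <= f.+1 by rewrite -Es1.
  have HS2' : Sch4 (A2 ++ n :: B2) by rewrite -Es2.
  have Hsz2' : size (A2 ++ n :: B2) <= f.+1 by rewrite -Es2.
  have [[a1 b1 c1 d1 [e1 g1]] Et1 HD1'' _ Hinv1] := gen_pack HD1 HS1' Hsz1' HA1.
  have [[a2 b2 c2 d2 [e2 g2]] Et2 HD2'' _ Hinv2] := gen_pack HD2 HS2' Hsz2' HA2.
  have [EA'' EB''] := cat_sep (DecH_notin HD1'') (DecH_notin HD2'') Heq.
  set h1 := head 0 (om f (minl A1 :: B1)) in Et1 HD1'' Hinv1 EA'' EB''.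
  set h2 := head 0 (om f (minl A2 :: B2)) in Et2 HD2'' Hinv2 EA'' EB''.
  have Eh : h1 = h2.
    have [_ _ Hh1 Hm1] := HD1''; have [_ _ Hh2 Hm2] := HD2''.
    rewrite EA'' in Hh1 Hm1.
    by apply/eqP; rewrite eqn_leq Hm1 // Hm2.
  have Et : om f (minl A1 :: B1) = om f (minl A2 :: B2).
    by rewrite Et1 Et2 -/h1 -/h2 Eh EB''.
  have [Ea1 EB] : minl A1 = minl A2 /\ B1 = B2.
    by case: (IH _ _ b1 b2 d1 d2 g1 g2 Et) => -> ->.
  have EoA : om f A1 = om f A2.
    by rewrite Hinv1 Hinv2 -/h1 -/h2 EA'' Eh Ea1.
  have EA := IH _ _ a1 a2 c1 c2 e1 e2 EoA.
  by rewrite Es1 Es2 EA EB.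
Qed.
Definition occ (s tau : seq nat) : Prop :=
  exists t, [/\ subseq t s, size t = size tau &
    forall a b, a < size tau -> b < size tau ->
      (nth 0 t a < nth 0 t b) = (nth 0 tau a < nth 0 tau b)].

Definition vals n (pi : {perm 'I_n}) : seq nat := [seq val (pi i) | i <- enum 'I_n].

Lemma contains_occ n (pi : {perm 'I_n}) tau : contains pi tau <-> occ (vals pi) tau.
Proof.
split.
- case=> idx [Hsz Hsort Hcmp].
  exists [seq val (pi i) | i <- idx]; split => //; last by rewrite size_map.
  have Hsub : subseq (map val idx) (map val (enum 'I_n)).
    rewrite val_enum_ord; apply: sorted_sub => //; first exact: iota_ltn_sorted.
    by move=> x /mapP [i _ ->]; rewrite mem_iota /= add0n ltn_ord.
  case/subseqP: Hsub => m Hm; rewrite -map_mask => /(inj_map val_inj) ->.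
  rewrite /vals map_mask; exact: mask_subseq.
- case=> t [/subseqP [m Hm Et] Hsz Hcmp].
  rewrite /vals -map_mask in Et; subst t.
  exists (mask m (enum 'I_n)); split => //.
  + by rewrite size_map in Hsz.
  + rewrite map_mask val_enum_ord; exact: (sorted_mask ltn_trans m (iota_ltn_sorted 0 n)).
Qed.

Lemma occ_inc k s : occ s (iota 0 k) <-> Pk k s.
Proof.
rewrite /occ size_iota; split.
- case=> t [Hs Hsz Hc]; exists t; split => //.
  apply/(sortedP 0) => i Hi; change (nth 0 t i < nth 0 t i.+1).
  have := Hc i i.+1; rewrite !nth_iota -?Hsz //; last exact: ltnW.
  by move=> /(_ (ltnW Hi) Hi) ->; rewrite !add0n.
- case=> t [Hs Hsz Ht]; exists t; split => // a b Ha Hb.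
  by rewrite !nth_iota // !add0n sorted_nth_cmp // Hsz.
Qed.

Lemma Sch4_occ s : uniq s -> Sch4 s <-> ~ occ s pat1243 /\ ~ occ s pat2143.
Proof.
move=> Hu; split.
- move=> HS; split; case=> [[|w [|x [|y [|z [|? ?]]]]]] [Hs Hsz Hc] //.
  + apply: (HS w x y z Hs).
    * by have := Hc 0 3 isT isT.
    * by have := Hc 1 3 isT isT.
    * by have := Hc 3 2 isT isT.
  + apply: (HS w x y z Hs).
    * by have := Hc 0 3 isT isT.
    * by have := Hc 1 3 isT isT.
    * by have := Hc 3 2 isT isT.
- case=> H1 H2 w x y z Hs Hwz Hxz Hzy.
  have Hu4 : uniq [:: w; x; y; z] := subseq_uniq Hs Hu.
  have Hwx : w != x by move: Hu4; rewrite /= !inE negb_or => /andP[/andP[]].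
  case: (ltngtP w x) => Hlt; last by move: Hwx; rewrite Hlt eqxx.
  + apply: H1; exists [:: w; x; y; z]; split => // a b Ha Hb.
    case: a Ha => [|[|[|[|a]]]] Ha //; case: b Hb => [|[|[|[|b]]]] Hb //=; lia.
  + apply: H2; exists [:: w; x; y; z]; split => // a b Ha Hb.
    case: a Ha => [|[|[|[|a]]]] Ha //; case: b Hb => [|[|[|[|b]]]] Hb //=; lia.
Qed.

Lemma occ_Q k s : 2 <= k -> occ s (pat2134 k) <-> Qk k s.
Proof.
move=> Hk; rewrite /occ /pat2134 /= size_iota; split.
- case=> [[|b [|a t]]] [Hs Hsz Hc] //; move: Hsz => /= [Hsz].
  exists b, a, t; split => //.
  + by have := Hc 1 0 isT isT.
  + apply/(sortedP 0) => i Hi; change (nth 0 t i < nth 0 t i.+1).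
    have := Hc i.+2 i.+3; rewrite /= !nth_iota; lia.
  + apply/allP => x Hx.
    have Hj : index x t < size t by rewrite index_mem.
    have := Hc 0 (index x t).+2 isT; rewrite /= nth_iota ?nth_index //; lia.
- case=> b [a [t [Hs Hab Ht Hall Hz]]].
  exists [:: b, a & t]; split => //=; first by rewrite Hz; lia.
  have Hb : forall j, j < size t -> b < nth 0 t j.
    by move=> j Hj; move/allP: Hall; apply; apply: mem_nth.
  move=> x y Hx Hy.
  case: x Hx => [|[|x]] Hx; case: y Hy => [|[|y]] Hy /=; rewrite ?nth_iota; try lia.
  + by have := Hb y ltac:(lia); lia.
  + by have := Hb y ltac:(lia); lia.
  + by have := Hb x ltac:(lia); lia.
  + by have := Hb x ltac:(lia); lia.
  + rewrite sorted_nth_cmp //; try rewrite Hz; lia.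
Qed.

Lemma schroder_Sch4 n (pi : {perm 'I_n}) : uniq (vals pi) -> schroder pi <-> Sch4 (vals pi).
Proof.
move=> Hu; rewrite (Sch4_occ Hu) /schroder /avoids !contains_occ; by [].
Qed.
Definition mkfun n (t : seq nat) : 'I_n -> 'I_n := fun i => insubd i (nth 0 t i).
Definition mkperm n (t : seq nat) : {perm 'I_n} :=
  match injectiveP (@mkfun n t) with ReflectT H => perm H | ReflectF _ => 1%g end.

Lemma vals_mkperm n t : perm_eq t (iota 0 n) -> vals (@mkperm n t) = t.
Proof.
move=> Hp.
have Hsz : size t = n by rewrite (perm_size Hp) size_iota.
have Hut : uniq t by rewrite (perm_uniq Hp) iota_uniq.
have Hlt : forall i : 'I_n, nth 0 t i < n.
  move=> i; have : nth 0 t i \in t by apply: mem_nth; rewrite Hsz.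
  by rewrite (perm_mem Hp) mem_iota add0n.
have Hval : forall i : 'I_n, val (@mkfun n t i) = nth 0 t i.
  by move=> i; rewrite /mkfun val_insubd Hlt.
have Hinj : injective (@mkfun n t).
  move=> i j /(congr1 val); rewrite !Hval => /eqP; rewrite nth_uniq ?Hsz //.
  by move/eqP/val_inj.
rewrite /mkperm; case: injectiveP => [H|H]; last by case: (H Hinj).
rewrite /vals (eq_map (g := nth 0 t \o val)); last by move=> i /=; rewrite permE Hval.
by rewrite map_comp val_enum_ord -Hsz; exact: mkseq_nth.
Qed.

Lemma vals_uniq n (pi : {perm 'I_n}) : uniq (vals pi).
Proof.
rewrite /vals map_inj_uniq ?enum_uniq //.
by move=> i j /val_inj /perm_inj.
Qed.

Lemma vals_perm n (pi : {perm 'I_n}) : perm_eq (vals pi) (iota 0 n).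
Proof.
have Hu := vals_uniq pi.
have Hsub : {subset vals pi <= iota 0 n}.
  by move=> x /mapP [i _ ->]; rewrite mem_iota add0n ltn_ord.
have Hsz : size (iota 0 n) <= size (vals pi) by rewrite size_iota size_map size_enum_ord.
apply: uniq_perm => //; first exact: iota_uniq.
exact: (uniq_min_size Hu Hsub Hsz).2.
Qed.

Lemma vals_size n (pi : {perm 'I_n}) : size (vals pi) = n.
Proof. by rewrite size_map size_enum_ord. Qed.

Lemma vals_inj n (p1 p2 : {perm 'I_n}) : vals p1 = vals p2 -> p1 = p2.
Proof.
move=> /eq_in_map E; apply/permP => i; apply: val_inj; apply: E.
by rewrite mem_enum.
Qed.

Definition sbool (P : Prop) : bool :=
  if ClassicalEpsilon.excluded_middle_informative P then true else false.

Lemma sboolP (P : Prop) : sbool P <-> P.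
Proof. by rewrite /sbool; case: ClassicalEpsilon.excluded_middle_informative. Qed.

Unset Implicit Arguments.

Theorem corollary3p4 (n : nat) : (1 <= n)%N ->
  exists omega : {perm 'I_n} -> {perm 'I_n},
    [/\ (forall pi, schroder pi -> schroder (omega pi)),
        (forall pi1 pi2, schroder pi1 -> schroder pi2 ->
           omega pi1 = omega pi2 -> pi1 = pi2),
        (forall sigma, schroder sigma ->
           exists2 pi, schroder pi & omega pi = sigma) &
        (forall (k : nat) (pi : {perm 'I_n}), (3 <= k)%N -> schroder pi ->
           (avoids pi (inc_pat k) <-> avoids (omega pi) (pat2134 k)))].
Proof.
move=> _.
pose w := fun pi : {perm 'I_n} => @mkperm n (om n (vals pi)).
have Hmain : forall pi, schroder pi ->
    [/\ vals (w pi) = om n (vals pi), Sch4 (om n (vals pi))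
      & forall k, Pk k (vals pi) <-> Q' k (om n (vals pi))].
  move=> pi Hs.
  have Hu := vals_uniq pi.
  have HS : Sch4 (vals pi) by apply/schroder_Sch4.
  have [Hp HS' Hst] := om_main (eq_leq (vals_size pi)) Hu HS.
  split => //; apply: vals_mkperm.
  exact: perm_trans Hp (vals_perm pi).
have Hsch : forall pi, schroder pi -> schroder (w pi).
  move=> pi Hs; have [E HS' _] := Hmain pi Hs.
  by apply/schroder_Sch4; rewrite E //; rewrite -E; apply: vals_uniq.
have Hinj : forall pi1 pi2, schroder pi1 -> schroder pi2 -> w pi1 = w pi2 -> pi1 = pi2.
  move=> p1 p2 H1 H2 E.
  have [E1 _ _] := Hmain p1 H1; have [E2 _ _] := Hmain p2 H2.
  apply: vals_inj; apply: (om_inj (f := n)).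
  - by rewrite vals_size.
  - by rewrite vals_size.
  - exact: vals_uniq.
  - exact: vals_uniq.
  - by apply/schroder_Sch4 => //; apply: vals_uniq.
  - by apply/schroder_Sch4 => //; apply: vals_uniq.
  - by rewrite -E1 -E2 E.
exists w; split => //.
- move=> sigma Hsig.
  set S := [set pi : {perm 'I_n} | sbool (schroder pi)].
  have HinjS : {in S &, injective w}.
    by move=> p1 p2; rewrite !inE => /sboolP H1 /sboolP H2; apply: Hinj.
  have Hsub : w @: S \subset S.
    apply/subsetP => x /imsetP [p Hp ->]; rewrite inE; apply/sboolP.
    by apply: Hsch; move: Hp; rewrite inE => /sboolP.
  have ES : w @: S = S.
    by apply/eqP; rewrite eqEcard Hsub (card_in_imset HinjS) leqnn.
  have : sigma \in w @: S by rewrite ES inE; apply/sboolP.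
  case/imsetP => p Hp ->; exists p => //.
  by move: Hp; rewrite inE => /sboolP.
- move=> k pi Hk Hs.
  have [E HS' Hst] := Hmain pi Hs.
  rewrite /avoids !contains_occ E occ_inc occ_Q ?(leq_trans _ Hk) //.
  rewrite Hst Q'_ge2 ?(leq_trans _ Hk) //.
Qed.
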